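(* Let $S_1,\dots,S_N$ be pairwise disjoint finite sets of variables, $S=\bigcup_iS_i$, and $\mu\in\mathcal{D}(\mathrm{Mem}[S])$. Then $S_1,\dots,S_N$ are mutually independent in $\mu$, i.e. $\mu(x)=\prod_{i=1}^N\pi_{S_i}\mu(p_{S_i}x)$ for all $x\in\mathrm{Mem}[S]$, if and only if for every family of functions $f_i:\mathrm{Mem}[S_i]\to[0,\infty)$ ($1\le i\le N$) that are all monotone or all antitone, $\mathbb{E}_{x\sim\mu}[\prod_{i}f_i(p_{S_i}x)]=\prod_i\mathbb{E}_{x\sim\mu}[f_i(p_{S_i}x)]$.
   Context: Values are real numbers; for finite $S$, $\mathrm{Mem}[S]$ is the set of maps $S\to\mathbb{R}$ with the pointwise order; $p_A$ denotes restriction to $A$; $\mathcal{D}(\cdot)$ denotes countably supported probability distributions; $\pi_A\mu$ is the marginal of $\mu$ on $A$. Monotone means non-decreasing and antitone means non-increasing in the pointwise order. *)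

(* Defs.v *)
From HB Require Import structures.
From mathcomp Require Import all_boot all_order all_algebra.
From mathcomp Require Import all_classical all_reals all_analysis.
Set Implicit Arguments. Unset Strict Implicit. Unset Printing Implicit Defensive.
Import Order.TTheory GRing.Theory Num.Theory.
Local Open Scope classical_set_scope.
Local Open Scope ring_scope.

Section Defs.
Variables (R : realType) (V : finType).

Definition MemS (A : {set V}) : Type := {v : V | v \in A} -> R.

Definition mem_le (A : {set V}) (m m' : MemS A) : Prop := forall v, m v <= m' v.
Definition monotoneM (A : {set V}) (f : MemS A -> R) : Prop :=
  forall m m', mem_le m m' -> f m <= f m'.
Definition antitoneM (A : {set V}) (f : MemS A -> R) : Prop :=
  forall m m', mem_le m m' -> f m' <= f m.

(* restriction p_A of a memory on all variables V (= S) to A *)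
Definition restr (A : {set V}) (x : V -> R) : MemS A := fun v => x (sval v).
Arguments restr : clear implicits.

Definition is_distr (mu : (V -> R) -> R) : Prop :=
  (forall x, 0 <= mu x) /\ countable [set x | mu x != 0] /\
  (\esum_(x in [set: V -> R]) (mu x)%:E = 1)%E.

Definition marg (A : {set V}) (mu : (V -> R) -> R) (y : MemS A) : \bar R :=
  \esum_(x in [set x | restr A x = y]) (mu x)%:E.

Definition expect (mu : (V -> R) -> R) (g : (V -> R) -> \bar R) : \bar R :=
  \esum_(x in [set: V -> R]) ((mu x)%:E * g x)%E.

End Defs.
Arguments restr {R V} A x.
Arguments marg {R V} A mu y.
Arguments MemS R {V} A.

(* Main.v *)
Require Import Defs.
From HB Require Import structures.
From mathcomp Require Import all_boot all_order all_algebra.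
From mathcomp Require Import all_classical all_reals all_analysis.
Import Order.TTheory GRing.Theory Num.Theory.
Local Open Scope ring_scope.

Section Aux.
Local Open Scope ereal_scope.
Context {R : realType}.

Lemma esumZl (T : choiceType) (I : set T) (a : T -> \bar R) (c : \bar R) :
  0 <= c -> (forall i, 0 <= a i) ->
  \esum_(i in I) (c * a i) = c * \esum_(i in I) a i.
Proof.
move=> c0 a0.
case: c c0 => [r| |//] c0.
- rewrite /esum -ereal_supZl //; last first.
    by apply/set0P; exists 0; exists set0; [exact: fsets_set0|rewrite fsbig_set0].
  congr ereal_sup; apply/seteqP; split=> x /=.
    by move=> [A IA <-]; exists (\sum_(i \in A) a i); [exists A|rewrite ge0_mule_fsumr].
  by move=> [y [A IA <-] <-]; exists A => //; rewrite ge0_mule_fsumr.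
- have [H|H] := eqVneq (\esum_(i in I) a i) 0.
    rewrite H mule0 esum1// => i Ii.
    have : a i <= 0.
      rewrite -H esum_ge//; exists [set i]%classic; last by rewrite fsbig_set1.
      by split; [exact: finite_set1|move=> ? ->].
    by move=> ai; rewrite (@le_anti _ _ (a i) 0 (introT andP (conj ai (a0 i)))) mule0.
  have Hgt : 0 < \esum_(i in I) a i by rewrite lt0e H esum_ge0.
  rewrite gt0_mulye//.
  have [i [Ii ai]] : exists i, I i /\ a i != 0.
    move: H; apply: contraNP => Hn; apply/eqP; apply: esum1 => i Ii.
    by case: (eqVneq (a i) 0) => // ai; exfalso; apply: Hn; exists i.
  apply/eqP; rewrite eq_le leey /=.
  apply: esum_ge; exists [set i]%classic; last by rewrite fsbig_set1 gt0_mulye// lt0e ai a0.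
  by split; [exact: finite_set1|move=> ? ->].
Qed.

Lemma esumZr (T : choiceType) (I : set T) (a : T -> \bar R) (c : \bar R) :
  0 <= c -> (forall i, 0 <= a i) ->
  \esum_(i in I) (a i * c) = (\esum_(i in I) a i) * c.
Proof.
move=> c0 a0; rewrite [RHS]muleC -esumZl//; apply: eq_esum => i _; exact: muleC.
Qed.

Variable (V : finType) (mu : (V -> R) -> R) (mu0 : forall x, (0 <= mu x)%R).

Lemma fiber (A : {set V}) (f : MemS R A -> \bar R) : (forall z, 0 <= f z) ->
  \esum_(y in [set: V -> R]%classic) ((mu y)%:E * f (restr A y)) =
  \esum_(z in [set: MemS R A]%classic) (marg A mu z * f z).
Proof.
move=> f0.
transitivity (\esum_(z in [set: MemS R A]%classic)
   \esum_(y in [set y | restr A y = z]%classic) ((mu y)%:E * f z)); last first.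
  by apply: eq_esum => z _; rewrite esumZr.
rewrite esum_esum; last by move=> z y _ _; rewrite mule_ge0// lee_fin.
rewrite (reindex_esum [set: V -> R]%classic _ (fun y => (restr A y, y))) //.
split.
- by move=> y _ /=; split.
- by move=> y y' _ _ [].
- by move=> [z y] /= [_ <-]; exists y.
Qed.


Variables (N : nat) (S : 'I_N -> {set V})
  (Hdisj : forall i j : 'I_N, i != j -> [disjoint S i & S j])
  (Hcover : \bigcup_(i < N) S i = [set: V]).

Definition Om (k : nat) : set (V -> R) :=
  [set y | forall v, (forall i : 'I_N, (i < k)%N -> v \notin S i) -> y v = 0%R]%classic.

Definition merge {j : 'I_N} (a : V -> R) (z : MemS R (S j)) : V -> R :=
  fun v => match (insub v : option {w : V | w \in S j}) with
           | Some w => z w | None => a v end.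

Lemma restr_merge (j : 'I_N) (a : V -> R) (z : MemS R (S j)) : restr (S j) (merge a z) = z.
Proof.
apply: boolp.funext => w; rewrite /restr /merge.
case: insubP => [u _ Hu|Hn]; first by congr z; apply: val_inj.
by case/negP: Hn; exact: (svalP w).
Qed.

Lemma restr_merge_other (i j : 'I_N) (a : V -> R) (z : MemS R (S j)) :
  i != j -> restr (S i) (merge a z) = restr (S i) a.
Proof.
move=> ij; apply: boolp.funext => w; rewrite /restr /merge.
case: insubP => [u Hu _|//].
by move: (disjointFr (Hdisj _ _ ij) (svalP w)); rewrite Hu.
Qed.

Lemma prod_split (F : 'I_N -> \bar R) k (Hk : (k < N)%N) :
  \prod_(i < N | (i < k.+1)%N) F i = F (Ordinal Hk) * \prod_(i < N | (i < k)%N) F i.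
Proof.
rewrite (bigD1 (Ordinal Hk)) //=; congr (_ * _); apply: eq_bigl => i.
by rewrite ltnS leq_eqVlt -val_eqE /=; case: (ltngtP i k).
Qed.

Lemma prodP (h : forall i, MemS R (S i) -> \bar R) (h0 : forall i z, 0 <= h i z) k :
  (k <= N)%N ->
  \esum_(y in Om k) \prod_(i < N | (i < k)%N) h i (restr (S i) y) =
  \prod_(i < N | (i < k)%N) \esum_(z in [set: MemS R (S i)]%classic) h i z.
Proof.
elim: k => [_|k IH Hk].
  rewrite !big_pred0 //; have -> : Om 0 = [set (fun=> 0%R)]%classic.
    apply/seteqP; split => y /=.
      by move=> Hy; apply: boolp.funext => v; apply: Hy.
    by move=> -> v.
  by rewrite esum_set1 ?big_pred0 // prode_ge0.
pose j := Ordinal Hk.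
rewrite prod_split (reindex_esum (Om k `*`` (fun=> [set: MemS R (S j)]%classic))%classic _
   (fun p => merge p.1 p.2)); last first.
  split.
  - move=> [a z] [/= Ha _] v Hv; rewrite /merge; case: insubP => [u Hu _|Hn].
      by move: (Hv j (ltnSn k)); rewrite Hu.
    apply: Ha => i Hi; apply: Hv; exact: ltnW.
  - move=> [a z] [a' z'] /set_mem [/= Ha _] /set_mem [/= Ha' _] E.
    have Ez : z = z' by rewrite -(restr_merge j a z) -(restr_merge j a' z') E.
    congr pair => //; apply: boolp.funext => v.
    case Hv: (v \in S j).
      have Hn : forall i : 'I_N, (i < k)%N -> v \notin S i.
        move=> i Hi; apply/negP => Hiv.
        have ij : i != j by rewrite -val_eqE /= neq_ltn Hi.
        by move: (disjointFr (Hdisj _ _ ij) Hiv); rewrite Hv.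
      by rewrite Ha ?Ha'.
    have := congr1 (fun f => f v) E; rewrite /merge /=.
    by case: insubP => [u Hu _|_]; [rewrite Hu in Hv|].
  - move=> y /= Hy; exists (pair (fun v => if v \in S j then 0%R else y v) (restr (S j) y)).
      split => //= v Hv; case: ifPn => // Hvj; apply: Hy => i Hi.
      move: Hi; rewrite ltnS leq_eqVlt => /orP[/eqP Hi|]; last exact: Hv.
      by have -> : i = j by apply: val_inj.
    apply: boolp.funext => v; rewrite /merge /=.
    case: insubP => [u Hu Hval|Hn]; first by rewrite /restr Hval.
    by rewrite (negPf Hn).
transitivity (\esum_(p in (Om k `*`` (fun=> [set: MemS R (S j)]%classic))%classic)
  (h j p.2 * \prod_(i < N | (i < k)%N) h i (restr (S i) p.1))).
  apply: eq_esum => -[a z] _ /=; rewrite (@prod_split _ k Hk) restr_merge; congr (_ * _).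
  apply: eq_bigr => i Hi; rewrite restr_merge_other //.
  by rewrite -val_eqE /= neq_ltn Hi.
rewrite -(@esum_esum _ _ _ (Om k) (fun=> [set: MemS R (S j)]%classic)
  (fun a z => h j z * \prod_(i < N | (i < k)%N) h i (restr (S i) a))) /=; last by move=> a z _ _; rewrite mule_ge0 // prode_ge0.
transitivity (\esum_(a in Om k) ((\esum_(z in [set: MemS R (S j)]%classic) h j z) *
   \prod_(i < N | (i < k)%N) h i (restr (S i) a))).
  apply: eq_esum => a _; apply: esumZr => //; exact: prode_ge0.
rewrite esumZl; first by rewrite IH // ltnW.
  exact: esum_ge0.
by move=> a; exact: prode_ge0.
Qed.

Lemma Om_N : Om N = [set: V -> R]%classic.
Proof.
apply/seteqP; split => // y _ v Hv.
have : v \in \bigcup_(i < N) S i by rewrite Hcover inE.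
by case/bigcupP => i _ Hi; move: (Hv i (ltn_ord i)); rewrite Hi.
Qed.

Lemma prodP_full (h : forall i, MemS R (S i) -> \bar R) (h0 : forall i z, 0 <= h i z) :
  \esum_(y in [set: V -> R]%classic) \prod_(i < N) h i (restr (S i) y) =
  \prod_(i < N) \esum_(z in [set: MemS R (S i)]%classic) h i z.
Proof.
rewrite -Om_N.
rewrite (eq_esum (b := fun y => \prod_(i < N | (i < N)%N) h i (restr (S i) y))); last first.
  by move=> y _; apply: eq_bigl => i; rewrite ltn_ord.
by rewrite prodP //; apply: eq_bigl => i; rewrite ltn_ord.
Qed.


Lemma forward
  (Hind : forall x : V -> R, (mu x)%:E = \prod_(i < N) marg (S i) mu (restr (S i) x))
  (f : forall i : 'I_N, MemS R (S i) -> R) (f0 : forall i m, (0 <= f i m)%R) :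
  expect mu (fun x => (\prod_(i < N) f i (restr (S i) x))%:E)
  = \prod_(i < N) expect mu (fun x => (f i (restr (S i) x))%:E).
Proof.
rewrite /expect.
transitivity (\esum_(y in [set: V -> R]%classic)
  \prod_(i < N) (marg (S i) mu (restr (S i) y) * (f i (restr (S i) y))%:E)).
  by apply: eq_esum => y _; rewrite Hind -prodEFin -big_split.
rewrite (@prodP_full (fun i z => marg (S i) mu z * (f i z)%:E)); last first.
  by move=> i z; rewrite mule_ge0 ?lee_fin // esum_ge0 // => y _; rewrite lee_fin.
apply: eq_bigr => i _; symmetry; apply: fiber => z; exact: f0.
Qed.

Variable (mu1 : \esum_(x in [set: V -> R]%classic) (mu x)%:E = 1).

Lemma expectD (a b : (V -> R) -> R) : (forall y, 0 <= a y)%R -> (forall y, 0 <= b y)%R ->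
  expect mu (fun y => (a y + b y)%:E) =
  expect mu (fun y => (a y)%:E) + expect mu (fun y => (b y)%:E).
Proof.
move=> a0 b0; rewrite /expect -esumD.
- by apply: eq_esum => y _; rewrite EFinD ge0_muleDr // lee_fin.
- by move=> y _; rewrite mule_ge0 // lee_fin.
- by move=> y _; rewrite mule_ge0 // lee_fin.
Qed.

Lemma expect_ge0 (a : (V -> R) -> R) : (forall y, 0 <= a y)%R ->
  0 <= expect mu (fun y => (a y)%:E).
Proof. by move=> a0; apply: esum_ge0 => y _; rewrite mule_ge0 // lee_fin. Qed.

Lemma expect_fin (a : (V -> R) -> R) : (forall y, 0 <= a y)%R -> (forall y, a y <= 1)%R ->
  expect mu (fun y => (a y)%:E) \is a fin_num.
Proof.
move=> a0 a1; rewrite ge0_fin_numE ?expect_ge0 //.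
apply: (le_lt_trans _ (ltry 1%R)); rewrite -mu1; apply: le_esum => y _.
by rewrite -EFinM lee_fin ler_piMr.
Qed.

Definition ind (P : Prop) : R := if `[< P >] then 1%R else 0%R.

Lemma ind_ge0 P : (0 <= ind P)%R. Proof. by rewrite /ind; case: ifP. Qed.
Lemma ind_le1 P : (ind P <= 1)%R. Proof. by rewrite /ind; case: ifP. Qed.

Lemma ind_esum (A : set (V -> R)) :
  expect mu (fun y => (ind (A y))%:E) = \esum_(y in A) (mu y)%:E.
Proof.
rewrite /expect [RHS]esum_mkcond; apply: eq_esum => y _; rewrite /ind.
by case: asboolP => Ay; [rewrite mem_set // mule1 | rewrite memNset // mule0].
Qed.


Variable (x : V -> R).

Definition G (k : nat) (c : 'I_N -> bool) (i : 'I_N) (m : MemS R (S i)) : R :=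
  if (i < k)%N then ind (m = restr (S i) x)
  else if c i then ind (mem_le (restr (S i) x) m)
  else ind (mem_le (restr (S i) x) m /\ m <> restr (S i) x).

Lemma G_ge0 k c i m : (0 <= G k c i m)%R.
Proof. by rewrite /G; case: ifP => _; [|case: ifP => _]; exact: ind_ge0. Qed.
Lemma G_le1 k c i m : (G k c i m <= 1)%R.
Proof. by rewrite /G; case: ifP => _; [|case: ifP => _]; exact: ind_le1. Qed.

Lemma G0_mono c i : monotoneM (G 0 c i).
Proof.
move=> m m' Hmm'; rewrite /G /=.
have trans : mem_le (restr (S i) x) m -> mem_le (restr (S i) x) m'.
  by move=> H v; exact: (le_trans (H v) (Hmm' v)).
case: ifP => _; rewrite /ind.
  by case: asboolP => H; case: asboolP => H' //; exfalso; exact: H' (trans H).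
case: asboolP => [[H1 H2]|_]; last by case: asboolP.
case: asboolP => H' //; exfalso; apply: H'; split; first exact: trans.
move=> E; apply: H2; apply: boolp.funext => v; apply: le_anti.
by rewrite (H1 v) andbT -E; exact: Hmm'.
Qed.

Definition EP k c := expect mu (fun y => (\prod_(i < N) G k c i (restr (S i) y))%:E).
Definition EE k c i := expect mu (fun y => (G k c i (restr (S i) y))%:E).

Lemma claim
  (Hmon : forall f : forall i : 'I_N, MemS R (S i) -> R,
     (forall i m, (0 <= f i m)%R) ->
     ((forall i, monotoneM (f i)) \/ (forall i, antitoneM (f i))) ->
     expect mu (fun x => (\prod_(i < N) f i (restr (S i) x))%:E)
      = \prod_(i < N) expect mu (fun x => (f i (restr (S i) x))%:E)) k :
  forall c, EP k c = \prod_(i < N) EE k c i.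
Proof.
elim: k => [|k IH] c.
  apply: Hmon; first exact: G_ge0.
  by left; exact: G0_mono.
case: (ltnP k N) => Hk; last first.
  have E i m : G k.+1 c i m = G k c i m.
    by rewrite /G ltnS (leq_trans (ltnW (ltn_ord i)) Hk) (leq_trans (ltn_ord i) Hk).
  transitivity (EP k c).
    rewrite /EP /expect; apply: eq_esum => y _; congr (_ * _%:E).
    by apply: eq_bigr => i _; rewrite E.
  rewrite IH; apply: eq_bigr => i _; rewrite /EE /expect; apply: eq_esum => y _.
  by rewrite E.
pose j := Ordinal Hk.
pose cT := fun i => (i == j) || c i.
pose cF := fun i => (i != j) && c i.
have ltj i : i != j -> (i < k.+1)%N = (i < k)%N.
  by move=> ij; rewrite ltnS leq_eqVlt -[X in (_ == X)]/(val j) val_eqE (negPf ij).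
have Fo1 i m : i != j -> G k.+1 c i m = G k cT i m.
  by move=> ij; rewrite /G ltj // /cT (negPf ij).
have Fo2 i m : i != j -> G k cF i m = G k cT i m.
  by move=> ij; rewrite /G /cT /cF ij (negPf ij).
have Fj m : G k cT j m = (G k.+1 c j m + G k cF j m)%R.
  rewrite /G /cT /cF eqxx ltnS leqnn ltnn /= /ind.
  case: asboolP => H1; case: asboolP => H2; case: asboolP => H3 //=;
    rewrite ?addr0 ?add0r //; exfalso;
    first [ by case: H3 => _ /(_ H2)
          | by apply: H3; split
          | by apply: H1; rewrite H2 => v
          | by apply: H1; case: H3 ].
have hC : EP k cT = EP k.+1 c + EP k cF.
  rewrite /EP -expectD; last 2 first.
    by move=> y; apply: prodr_ge0 => i _; exact: G_ge0.
    by move=> y; apply: prodr_ge0 => i _; exact: G_ge0.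
  rewrite /expect; apply: eq_esum => y _; congr (_ * _%:E).
  rewrite (bigD1 j) //= [X in (_ = X + _)%R](bigD1 j) //= [X in (_ = _ + X)%R](bigD1 j) //=.
  rewrite Fj mulrDl; congr (_ * _ + _ * _)%R; apply: eq_bigr => i ij.
    by rewrite Fo1.
  by rewrite Fo2.
have hj : EE k cT j = EE k.+1 c j + EE k cF j.
  rewrite /EE -expectD; [|move=> y; exact: G_ge0..].
  by rewrite /expect; apply: eq_esum => y _; rewrite Fj.
have hR : \prod_(i < N | i != j) EE k cF i = \prod_(i < N | i != j) EE k cT i.
  apply: eq_bigr => i ij; rewrite /EE /expect; apply: eq_esum => y _.
  by rewrite Fo2.
have hR' : \prod_(i < N | i != j) EE k.+1 c i = \prod_(i < N | i != j) EE k cT i.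
  apply: eq_bigr => i ij; rewrite /EE /expect; apply: eq_esum => y _.
  by rewrite Fo1.
have hB : EP k cF \is a fin_num.
  apply: expect_fin => y; [apply: prodr_ge0 => i _; exact: G_ge0|].
  by apply: prodr_ile1 => i _; rewrite G_ge0 G_le1.
have EE0 k' c' i : 0 <= EE k' c' i by apply: expect_ge0 => y; exact: G_ge0.
rewrite (bigD1 j) //= hR'.
have HT := IH cT; have HF := IH cF.
rewrite (bigD1 j) //= in HT; rewrite (bigD1 j) //= hR in HF.
rewrite hC hj ge0_muleDl // in HT.
by rewrite -(addeK (EP k.+1 c) hB) HT -HF addeK.
Qed.


Lemma GN c i m : G N c i m = ind (m = restr (S i) x).
Proof. by rewrite /G ltn_ord. Qed.

Lemma EE_N c i : EE N c i = marg (S i) mu (restr (S i) x).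
Proof.
rewrite /EE /expect (eq_esum (b := fun y => (mu y)%:E * (ind ([set y | restr (S i) y = restr (S i) x]%classic y))%:E)); last first.
  by move=> y _; rewrite GN.
exact: ind_esum.
Qed.

Lemma EP_N c : EP N c = (mu x)%:E.
Proof.
rewrite /EP /expect (eq_esum (b := fun y => (mu y)%:E * (ind ([set x]%classic y))%:E)); last first.
  move=> y _; congr (_ * _%:E).
  under eq_bigr do rewrite GN.
  rewrite /ind /=; case: asboolP => [->|Hyx].
    by rewrite big1 // => i _; case: asboolP.
  have [v Hv] : exists v, y v <> x v.
    apply: contrapT => Hn; apply: Hyx; apply: boolp.funext => v.
    by apply: contrapT => H; apply: Hn; exists v.
  have : v \in \bigcup_(i < N) S i by rewrite Hcover inE.
  case/bigcupP => i0 _ Hi0.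
  rewrite (bigD1 i0) //=; case: asboolP => [E|_]; last by rewrite mul0r.
  by exfalso; apply: Hv; move: (congr1 (fun f => f (exist _ v Hi0)) E).
transitivity (\esum_(y in [set x]%classic) (mu y)%:E); first exact: ind_esum.
by rewrite esum_set1 // lee_fin.
Qed.

End Aux.

Theorem mainTheorem15 (R : realType) (V : finType) (N : nat)
  (S : 'I_N -> {set V})
  (Hdisj : forall i j : 'I_N, i != j -> [disjoint S i & S j])
  (Hcover : \bigcup_(i < N) S i = [set: V])
  (mu : (V -> R) -> R) (Hmu : is_distr mu) :
  (forall x : V -> R,
     ((mu x)%:E = \prod_(i < N) marg (S i) mu (restr (S i) x))%E)
  <->
  (forall f : forall i : 'I_N, MemS R (S i) -> R,
     (forall i m, 0 <= f i m) ->
     ((forall i, monotoneM (f i)) \/ (forall i, antitoneM (f i))) ->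
     (expect mu (fun x => (\prod_(i < N) f i (restr (S i) x))%:E)
      = \prod_(i < N) expect mu (fun x => (f i (restr (S i) x))%:E))%E).
Proof.
case: Hmu => mu0 [_ mu1]; split.
  by move=> Hind f f0 _; exact: (@forward R V mu mu0 N S Hdisj Hcover Hind f f0).
move=> Hmon x.
have := @claim R V mu mu0 N S mu1 x Hmon N (fun=> true).
rewrite EP_N //; move=> ->; apply: eq_bigr => i _; exact: EE_N.
Qed.
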